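(* Let $K$ be an algebraically closed field of characteristic $0$ and $G=Q\ltimes N$ a finite group. Let $\mathcal{W}$ be an irreducible representation of $N$, $Q_1\leq Q$ a subgroup, $Q_2=\mathrm{Stab}_Q([\mathcal{W}])$ and $Q_3=Q_1\cap Q_2$, and assume $\mathcal{W}$ extends to a representation of $Q_2\ltimes N$; fix such an extension. Let $U$ be an irreducible representation of $Q_3$ and $V$ an irreducible representation of $Q_2$ (inflated to $Q_3\ltimes N$, resp. $Q_2\ltimes N$). Then $\widetilde U=\mathrm{Ind}_{Q_3\ltimes N}^{Q_1\ltimes N}(U\otimes\mathcal{W})$ is an irreducible representation of $Q_1\ltimes N$, $\widetilde V=\mathrm{Ind}_{Q_2\ltimes N}^{G}(V\otimes\mathcal{W})$ is an irreducible representation of $G$, and the map $$\mathrm{Hom}_{Q_3}(U,\mathrm{Res}^{Q_2}_{Q_3}V)\to\mathrm{Hom}_{Q_1\ltimes N}(\widetilde U,\mathrm{Res}^G_{Q_1\ltimes N}\widetilde V),\qquad T\mapsto\widetilde T,\ \ \widetilde T(g\otimes u\otimes w)=g\otimes T(u)\otimes w,$$ is an isomorphism. As a result, the $\widetilde U$-isotypic component of $\mathrm{Res}^G_{Q_1\ltimes N}\widetilde V$ equals $K(Q_1\ltimes N)\otimes_{K(Q_3\ltimes N)}(V_U\otimes\mathcal{W})\subseteq\widetilde V$, where $V_U$ is the $U$-isotypic component of $\mathrm{Res}^{Q_2}_{Q_3}V$.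
   Context: $Q$ acts on isomorphism classes of $N$-representations by twisting with conjugation, and $\mathrm{Stab}_Q([\mathcal{W}])$ is the stabilizer of the class of $\mathcal{W}$. Tensor products of representations carry the diagonal action. *)

(* Defs.v *)
From HB Require Import structures.
From mathcomp Require Import all_boot all_order all_algebra all_fingroup.
From mathcomp Require Import all_solvable all_field all_character.
Set Implicit Arguments.
Unset Strict Implicit.
Unset Printing Implicit Defensive.
Import GRing.Theory.
Local Open Scope ring_scope.
Local Open Scope group_scope.

(* Conventions.
   - A (finite-dimensional) representation of a subgroup H on a vector space
     V (a vectType) with carrier subspace M is given by an action
     act : gT -> V -> V, used only for x \in H and v \in M.
   - A matrix representation r : mx_representation F H n acts on COLUMN
     vectors 'cV_n by  v |-> r x *m v  (a left module).
   - Tensor product of 'cV_m and 'cV_n is modelled by 'M_(m,n), u (x) w =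
     u *m w^T; (r (x) s) x acts as X |-> r x *m X *m (s x)^T.
   - The induced module K G (x)_{K H} X is modelled by functions
     f : gT -> X; the elementary tensor g (x) x is [elem_ind H rho g x],
     the function y |-> rho (y^-1 g) x if y^-1 g \in H, 0 otherwise;
     G acts by (a . f)(y) = f (a^-1 y). *)

Section Defs.
Variables (F : fieldType) (gT : finGroupType).

Definition stable_sp (V : vectType F) (H : {set gT}) (act : gT -> V -> V)
    (M : {vspace V}) :=
  forall x v, x \in H -> v \in M -> act x v \in M.

Definition irr_mod (V : vectType F) (H : {set gT}) (act : gT -> V -> V)
    (M : {vspace V}) :=
  M != 0%VS /\
  forall M' : {vspace V}, (M' <= M)%VS -> stable_sp H act M' ->
    M' = 0%VS \/ M' = M.

Definition is_hom (V1 V2 : vectType F) (H : {set gT})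
    (act1 : gT -> V1 -> V1) (M1 : {vspace V1})
    (act2 : gT -> V2 -> V2) (M2 : {vspace V2}) (f : 'Hom(V1, V2)) :=
  (f @: M1 <= M2)%VS /\
  forall x v, x \in H -> v \in M1 -> f (act1 x v) = act2 x (f v).

Definition iso_mod (V1 V2 : vectType F) (H : {set gT})
    (act1 : gT -> V1 -> V1) (M1 : {vspace V1})
    (act2 : gT -> V2 -> V2) (M2 : {vspace V2}) :=
  exists f : 'Hom(V1, V2),
    [/\ is_hom H act1 M1 act2 M2 f, (f @: M1)%VS = M2
      & \dim (f @: M1) = \dim M1].

(* C is the (M0,act0)-isotypic component of (M,act): the sum of all
   submodules of M isomorphic to M0 (finite-dimensionality makes the sum
   a finite one). *)
Definition is_isotypic (V V0 : vectType F) (H : {set gT})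
    (act : gT -> V -> V) (M : {vspace V})
    (act0 : gT -> V0 -> V0) (M0 : {vspace V0}) (C : {vspace V}) :=
  (exists s : seq {vspace V},
      (forall X, X \in s ->
         [/\ (X <= M)%VS, stable_sp H act X & iso_mod H act X act0 M0])
      /\ C = (\sum_(X <- s) X)%VS)
  /\ (forall X : {vspace V}, (X <= M)%VS -> stable_sp H act X ->
        iso_mod H act X act0 M0 -> (X <= C)%VS).

Definition mxact n (r : gT -> 'M[F]_n) (x : gT) (v : 'cV[F]_n) : 'cV[F]_n :=
  r x *m v.

Definition mxrep_iso n (H : {set gT}) (r1 r2 : gT -> 'M[F]_n) :=
  exists2 B : 'M[F]_n, B \in unitmx & forall x, x \in H -> r1 x *m B = B *m r2 x.

(* tensor product (inflated U) (x) W for a group  Q' |x N  inside Q |x N: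
   x = q n acts through rU q and rW x *)
Definition tens_act (Q N : {set gT}) m n (rU : gT -> 'M[F]_m)
    (rW : gT -> 'M[F]_n) (x : gT) (X : 'M[F]_(m, n)) : 'M[F]_(m, n) :=
  rU (divgr Q N x) *m X *m (rW x)^T.

Definition tens_sp m n (M1 : {vspace 'cV[F]_m}) (M2 : {vspace 'cV[F]_n})
    : {vspace 'M[F]_(m, n)} :=
  <<[seq v *m w^T | v <- vbasis M1, w <- vbasis M2]>>%VS.

Definition elem_ind (V0 : vectType F) (H : {set gT}) (rho : gT -> V0 -> V0)
    (g : gT) (x : V0) : {ffun gT -> V0} :=
  [ffun y => if (y^-1 * g) \in H then rho (y^-1 * g) x else 0%R].

Definition ind_act (V0 : vectType F) (a : gT) (f : {ffun gT -> V0})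
    : {ffun gT -> V0} :=
  [ffun y => f (a^-1 * y)].

Definition ind_sp (V0 : vectType F) (H : {set gT}) (rho : gT -> V0 -> V0)
    (K : {set gT}) (M0 : {vspace V0}) : {vspace {ffun gT -> V0}} :=
  <<[seq elem_ind H rho g x | g <- enum K, x <- vbasis M0]>>%VS.

End Defs.

(* Main.v *)
Require Import Defs.
From HB Require Import structures.
From mathcomp Require Import all_boot all_order all_algebra all_fingroup.
From mathcomp Require Import all_solvable all_field all_character.
Import GRing.Theory.
Local Open Scope ring_scope.
Set Implicit Arguments.
Unset Strict Implicit.
Unset Printing Implicit Defensive.


Section Gen.
Variables (F : fieldType) (gT : finGroupType).

Definition lin (V W : vectType F) (f : V -> W) :=
  forall (k : F) x y, f (k *: x + y) = k *: f x + f y.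

Lemma lin0 (V W : vectType F) (f : V -> W) : lin f -> f 0 = 0.
Proof. by move=> h; have e := h 1 0 0; rewrite scaler0 addr0 scale1r in e; apply: (@addrI _ (f 0)); rewrite addr0 -e. Qed.

Lemma linD (V W : vectType F) (f : V -> W) : lin f -> forall x y, f (x + y) = f x + f y.
Proof. by move=> h x y; have := h 1 x y; rewrite !scale1r. Qed.

Lemma linZ (V W : vectType F) (f : V -> W) : lin f -> forall k x, f (k *: x) = k *: f x.
Proof. by move=> h k x; rewrite -[k *: x]addr0 h (lin0 h) addr0. Qed.

Lemma lin_sum (V W : vectType F) (f : V -> W) (I : Type) (r : seq I) (P : pred I) (G : I -> V) :
  lin f -> f (\sum_(i <- r | P i) G i) = \sum_(i <- r | P i) f (G i).
Proof.
move=> h; elim/big_rec2: _ => [|i y1 y2 _ <-]; first exact: lin0.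
exact: linD.
Qed.

Lemma lin_hom (V W : vectType F) (f : 'Hom(V, W)) : lin f.
Proof. by move=> k x y; rewrite linearD linearZ. Qed.

Lemma span_ind (V : vectType F) (P : V -> Prop) (s : seq V) :
  P 0 -> (forall k u v, P u -> P v -> P (k *: u + v)) ->
  (forall x, x \in s -> P x) -> forall v, v \in <<s>>%VS -> P v.
Proof.
move=> P0 Pl; elim: s => [|x s IH] Ps v.
  by rewrite span_nil memv0 => /eqP->.
rewrite span_cons => /memv_addP[u /vlineP[k ->] [w ws ->]].
apply: Pl; first by apply: Ps; rewrite inE eqxx.
by apply: IH => // z zs; apply: Ps; rewrite inE zs orbT.
Qed.

Lemma vsp_ind (V : vectType F) (P : V -> Prop) (U : {vspace V}) :
  P 0 -> (forall k u v, P u -> P v -> P (k *: u + v)) ->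
  (forall x, x \in U -> P x) -> forall v, v \in U -> P v.
Proof. by []. Qed.

Lemma lfunE' (V W : vectType F) (f : V -> W) : lin f -> linfun f =1 f.
Proof.
move=> hf x.
pose lf := HB.pack_for {linear V -> W} f (GRing.isLinear.Build F V W *:%R f hf).
exact: (lfunE lf x).
Qed.

End Gen.


Section Ind.
Variables (F : fieldType) (gT : finGroupType) (V0 : vectType F).
Implicit Types (H K : {group gT}) (rho : gT -> V0 -> V0).

Lemma elem_indE (H : {set gT}) rho g x y :
  elem_ind H rho g x y = if (y^-1 * g)%g \in H then rho (y^-1 * g)%g x else 0.
Proof. by rewrite ffunE. Qed.

Lemma ind_actE a (f : {ffun gT -> V0}) y : ind_act a f y = f (a^-1 * y)%g.
Proof. by rewrite ffunE. Qed.

Lemma elem_ind_lin (H : {set gT}) rho g :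
  (forall h, h \in H -> lin (rho h)) -> lin (elem_ind H rho g).
Proof.
move=> hl k x z; apply/ffunP=> y; rewrite !ffunE.
by case: ifP => [hH|_]; [apply: hl | rewrite scaler0 addr0].
Qed.

Lemma ind_act_lin a : lin (@ind_act F gT V0 a).
Proof. by move=> k x z; apply/ffunP=> y; rewrite !ffunE. Qed.

Lemma ind_act_elem (H : {set gT}) rho a g x :
  ind_act a (elem_ind H rho g x) = elem_ind H rho (a * g)%g x.
Proof. by apply/ffunP=> y; rewrite !ffunE invMg invgK mulgA. Qed.

Lemma ind_actM a b (f : {ffun gT -> V0}) :
  ind_act a (ind_act b f) = ind_act (a * b)%g f.
Proof. by apply/ffunP=> y; rewrite !ffunE invMg mulgA. Qed.

Lemma ind_act1 (f : {ffun gT -> V0}) : ind_act 1%g f = f.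
Proof. by apply/ffunP=> y; rewrite !ffunE invg1 mul1g. Qed.

Lemma ind_sp_ind (H K : {set gT}) rho (M0 : {vspace V0}) (P : {ffun gT -> V0} -> Prop) :
  P 0 -> (forall k u v, P u -> P v -> P (k *: u + v)) ->
  (forall g x, g \in K -> x \in vbasis M0 -> P (elem_ind H rho g x)) ->
  forall f, f \in ind_sp H rho K M0 -> P f.
Proof.
move=> P0 Pl Pg; apply: span_ind => // f /allpairsP[[g x] /= [gK xb ->]].
by apply: Pg; rewrite // -(mem_enum K).
Qed.

Lemma mem_ind_sp (H K : {set gT}) rho (M0 : {vspace V0}) g x :
  (forall h, h \in H -> lin (rho h)) -> g \in K -> x \in M0 ->
  elem_ind H rho g x \in ind_sp H rho K M0.
Proof.
move=> hl gK xM; rewrite (coord_vbasis xM).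
rewrite (lin_sum _ _ _ (elem_ind_lin g hl)); apply: memv_suml => i _.
rewrite (linZ (elem_ind_lin g hl)); apply: memvZ; apply: memv_span.
apply/allpairsP; exists (g, (vbasis M0)`_i) => /=; split => //.
  by rewrite mem_enum.
by apply: mem_nth; rewrite size_tuple.
Qed.

Lemma ind_sp_stable (H : {set gT}) K rho (M0 : {vspace V0}) :
  stable_sp K (@ind_act F gT V0) (ind_sp H rho K M0).
Proof.
move=> a f aK; move: f; apply: (ind_sp_ind (P := fun f => ind_act a f \in ind_sp H rho K M0)).
- by rewrite (lin0 (@ind_act_lin a)) mem0v.
- move=> k u v hu hv; rewrite (ind_act_lin a); apply: memvD => //; exact: memvZ.
- move=> g x gK xb; rewrite ind_act_elem; apply: memv_span.
  apply/allpairsP; exists ((a * g)%g, x); split => //=.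
  by rewrite mem_enum groupM.
Qed.

Lemma ind_sp_mono (H : {set gT}) (K K' : {set gT}) rho (M0 M0' : {vspace V0}) :
  (forall h, h \in H -> lin (rho h)) -> K \subset K' -> (M0 <= M0')%VS ->
  (ind_sp H rho K M0 <= ind_sp H rho K' M0')%VS.
Proof.
move=> hl sK sM; apply/subvP; apply: (ind_sp_ind (P := fun f => f \in ind_sp H rho K' M0')).
- exact: mem0v.
- by move=> k u v hu hv; apply: memvD => //; apply: memvZ.
- move=> g x gK xb; apply: mem_ind_sp => //; first exact: (subsetP sK).
  by apply: (subvP sM); apply: vbasis_mem.
Qed.

Lemma ind_sp_supp H K rho (M0 : {vspace V0}) f y :
  H \subset K -> f \in ind_sp H rho K M0 -> y \notin K -> f y = 0.
Proof.
move=> sHK fI yK; move: f fI; apply: (ind_sp_ind (P := fun f => f y = 0)).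
- by rewrite ffunE.
- by move=> k u v hu hv; rewrite !ffunE hu hv scaler0 addr0.
- move=> g x gK _; rewrite elem_indE; case: ifP => // hH; exfalso.
  move/negP: yK; apply; have := subsetP sHK _ hH.
  by rewrite groupMr // groupV.
Qed.

Lemma ind_sp_eqv H (K : {set gT}) rho (M0 : {vspace V0}) f y k :
  (forall h, h \in H -> lin (rho h)) ->
  (forall h1 h2 x, h1 \in H -> h2 \in H -> rho (h1 * h2)%g x = rho h1 (rho h2 x)) ->
  f \in ind_sp H rho K M0 -> k \in H -> f (y * k)%g = rho k^-1%g (f y).
Proof.
move=> hl hm fI kH; move: f fI.
apply: (ind_sp_ind (P := fun f => f (y * k)%g = rho k^-1%g (f y))).
- by rewrite !ffunE (lin0 (hl _ _)) // groupV.
- by move=> c u v hu hv; rewrite !ffunE hu hv (hl _ _) // groupV.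
- move=> g x gK _; rewrite !elem_indE invMg -mulgA groupMl ?groupV //.
  case: ifP => hH; last by rewrite (lin0 (hl _ _)) // groupV.
  by rewrite hm // groupV.
Qed.

End Ind.


Section Mx.
Variables (F : fieldType) (gT : finGroupType).

Lemma outer_ind a b (P : 'M[F]_(a, b) -> Prop) :
  P 0 -> (forall k u v, P u -> P v -> P (k *: u + v)) ->
  (forall (u : 'cV_a) (w : 'cV_b), P (u *m w^T)) -> forall X, P X.
Proof.
move=> P0 Pl Po X; rewrite (matrix_sum_delta X).
have PD u v : P u -> P v -> P (u + v) by move=> hu hv; rewrite -[u]scale1r; apply: Pl.
apply: big_ind => // i _; apply: big_ind => // j _.
rewrite -[_ *: _]addr0; apply: Pl => //.
have -> : delta_mx i j = (delta_mx i 0 : 'cV[F]_a) *m (delta_mx j 0 : 'cV[F]_b)^T.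
  by apply/matrixP=> r s; rewrite !mxE big_ord1 !mxE !eqxx !andbT -natrM mulnb.
exact: Po.
Qed.

Lemma hom_to_mx a c (g : 'cV[F]_a -> 'cV[F]_c) : lin g ->
  exists T : 'M_(c, a), forall u, g u = T *m u.
Proof.
move=> hg; exists (\matrix_(i, j) g (delta_mx j 0) i 0) => u.
have Du : u = \sum_(j < a) u j 0 *: delta_mx j 0.
  rewrite {1}(matrix_sum_delta u); apply: eq_bigr => j _.
  by rewrite big_ord1.
rewrite {1}Du (lin_sum _ _ _ hg); apply/matrixP => i k.
rewrite ord1 summxE !mxE; apply: eq_bigr => j _.
by rewrite (linZ hg) !mxE mulrC.
Qed.

Lemma schurK b (N : {set gT}) (rW : gT -> 'M[F]_b) (R : gT -> 'M[F]_b) (L : 'M[F]_b) :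
  irr_mod N (mxact rW) fullv ->
  (forall n, n \in N -> L *m rW n = R n *m L) -> L = 0 \/ L \in unitmx.
Proof.
move=> [_ hirr] hL.
pose K := lker (linfun (mulmx L : 'cV[F]_b -> 'cV[F]_b)).
have memK v : (v \in K) = (L *m v == 0) by rewrite memv_ker lfunE.
have sK : stable_sp N (mxact rW) K.
  move=> x v xN; rewrite !memK /mxact mulmxA hL // -mulmxA => /eqP->.
  by rewrite mulmx0.
case: (hirr K (subvf K) sK) => [K0|Kf].
  right; rewrite unitmxE unitfE -det_tr; apply/negP => /det0P[v nv vL].
  move/negP: nv; apply; rewrite -trmx_eq0 -memv0 -K0 memK.
  by rewrite -[L]trmxK -trmx_mul vL trmx0.
left; apply/matrixP => i j; rewrite mxE.
have : delta_mx j 0 \in K by rewrite Kf memvf.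
by rewrite memK -colE => /eqP/matrixP/(_ i 0); rewrite !mxE.
Qed.
End Mx.

Lemma schurS (F : closedFieldType) (gT : finGroupType) n (H : {set gT})
  (r : gT -> 'M[F]_n) (L : 'M[F]_n) :
  irr_mod H (mxact r) fullv -> (forall h, h \in H -> L *m r h = r h *m L) ->
  exists l, L = l%:M.
Proof.
move=> hirr hL; case: n r L hirr hL => [|n] r L hirr hL.
  by exists 0; apply/matrixP => [[]].
have : size (char_poly L) != 1 by rewrite size_char_poly.
case/closed_rootP => l; rewrite -eigenvalue_root_char => /eigenvalueP[v vL nv].
exists l; have [h hH|/eqP|uM] := schurK (R := r) (L := L - l%:M) hirr.
- by rewrite mulmxBl mulmxBr hL // scalar_mxC.
- by rewrite subr_eq0 => /eqP.
exfalso; move: uM; rewrite unitmxE unitfE => /negP; apply.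
by apply/det0P; exists v => //; rewrite mulmxBr vL mul_mx_scalar subrr.
Qed.


Section Intertw.
Variables (F : fieldType) (gT : finGroupType).

Lemma delta_mulE a b (i : 'I_a) (j : 'I_b) (M : 'M[F]_b) :
  delta_mx i j *m M^T = \sum_(l < b) M l j *: delta_mx i l.
Proof.
apply/matrixP => p q; rewrite !mxE summxE.
rewrite (bigD1 j) //= big1 => [|l /negbTE lj]; last by rewrite !mxE lj andbF mul0r.
rewrite (bigD1 q) //= [X in _ = _ + X]big1 => [|l /negbTE lq]; last first.
  by rewrite !mxE [q == l]eq_sym lq andbF mulr0.
by rewrite !mxE !eqxx !andbT !addr0 mulrC.
Qed.

Lemma lin_decomp a b c (psi : 'M[F]_(a, b) -> 'M[F]_(c, b)) X : lin psi ->
  psi X = \sum_(i < a) \sum_(j < b) X i j *: psi (delta_mx i j).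
Proof.
move=> hl; rewrite {1}(matrix_sum_delta X) (lin_sum _ _ _ hl).
apply: eq_bigr => i _; rewrite (lin_sum _ _ _ hl); apply: eq_bigr => j _.
exact: (linZ hl).
Qed.

Lemma intertw a b c (N : {set gT}) (rW R : gT -> 'M[F]_b)
  (psi : 'M[F]_(a, b) -> 'M[F]_(c, b)) (i : 'I_a) (r : 'I_c) :
  lin psi -> (forall n X, n \in N -> psi (X *m (rW n)^T) = psi X *m (R n)^T) ->
  forall n, n \in N ->
  (\matrix_(k, j) psi (delta_mx i j) r k) *m rW n =
   R n *m (\matrix_(k, j) psi (delta_mx i j) r k).
Proof.
move=> hl hR n nN; apply/matrixP => k j.
have e := congr1 (fun M : 'M[F]_(c, b) => M r k) (hR n (delta_mx i j) nN).
rewrite /= delta_mulE (lin_sum _ _ _ hl) summxE mxE in e.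
rewrite !mxE.
transitivity (\sum_(l < b) (psi (rW n l j *: delta_mx i l)) r k).
  by apply: eq_bigr => l _; rewrite (linZ hl) !mxE mulrC.
by rewrite e; apply: eq_bigr => l _; rewrite !mxE mulrC.
Qed.

End Intertw.


Lemma elem_ind_rho (F : fieldType) (gT : finGroupType) (V0 : vectType F)
  (H : {group gT}) (rho : gT -> V0 -> V0) g h x :
  (forall h, h \in H -> lin (rho h)) ->
  (forall h1 h2 x, h1 \in H -> h2 \in H -> rho (h1 * h2)%g x = rho h1 (rho h2 x)) ->
  h \in H -> elem_ind H rho g (rho h x) = elem_ind H rho (g * h)%g x.
Proof.
move=> hl hm hH; apply/ffunP => y; rewrite !elem_indE mulgA (groupMr _ hH).
by case: ifP => zH //; rewrite [RHS]hm.
Qed.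

Section GL.
Variables (F : closedFieldType) (gT : finGroupType).
Variables (N A B C K : {group gT}) (a b c : nat).
Variables (tU : gT -> 'M[F]_(a, b) -> 'M[F]_(a, b)) (tV : gT -> 'M[F]_(c, b) -> 'M[F]_(c, b)).
Variable rW : gT -> 'M[F]_b.
Hypothesis hWirr : irr_mod N (mxact rW) fullv.
Hypotheses (sBA : B \subset A) (sBC : B \subset C) (sCK : C \subset K) (sNB : N \subset B).
Hypothesis nNK : K \subset ('N(N))%g.
Hypothesis tUl : forall h, h \in B -> lin (tU h).
Hypothesis tVl : forall h, h \in C -> lin (tV h).
Hypothesis tUm : forall h1 h2 X, h1 \in B -> h2 \in B -> tU (h1 * h2)%g X = tU h1 (tU h2 X).
Hypothesis tVm : forall h1 h2 X, h1 \in C -> h2 \in C -> tV (h1 * h2)%g X = tV h1 (tV h2 X).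
Hypothesis tUN : forall n X, n \in N -> tU n X = X *m (rW n)^T.
Hypothesis tVN : forall n X, n \in N -> tV n X = X *m (rW n)^T.
Hypothesis hstab : forall y L, y \in K -> L \in unitmx ->
  (forall n, n \in N -> L *m rW n = rW (n ^ y)%g *m L) -> y \in C.

Let Ut := ind_sp B tU A fullv.
Let Vt := ind_sp C tV K fullv.

Lemma GL (S : 'Hom({ffun gT -> 'M[F]_(a, b)}, {ffun gT -> 'M[F]_(c, b)})) :
  is_hom A (@ind_act F gT _) Ut (@ind_act F gT _) Vt S ->
  exists T : 'M[F]_(c, a),
    (forall k X, k \in B -> T *m tU k X = tV k (T *m X)) /\
    (forall g X, g \in A -> S (elem_ind B tU g X) = elem_ind C tV g (T *m X)).
Proof.
move=> [sS hS].
have sNC : N \subset C := subset_trans sNB sBC.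
have hb : (0 < b)%N.
  case: hWirr => nz _; rewrite lt0n; move: nz; apply: contraNneq => b0.
  by rewrite -dimv_eq0 dimvf dim_matrix b0.
pose e1 X := elem_ind B tU 1%g X.
pose Phi X := S (e1 X).
have e1l : lin e1 := elem_ind_lin 1%g tUl.
have Phil : lin Phi by move=> k x y; rewrite /Phi e1l (lin_hom S).
have e1U X : e1 X \in Ut by apply: (mem_ind_sp tUl (group1 A) (memvf X)).
have PhiV X : Phi X \in Vt by apply: (subvP sS); apply: memv_img.
have PhiB h X : h \in B -> Phi (tU h X) = ind_act h (Phi X).
  move=> hB; rewrite /Phi /e1 elem_ind_rho // mul1g -hS ?(subsetP sBA) //.
  by rewrite ind_act_elem mulg1.
have Vsupp f y : f \in Vt -> y \notin K -> f y = 0.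
  by move=> fV yK; apply: (ind_sp_supp sCK fV yK).
have Veqv f y k : f \in Vt -> k \in C -> f (y * k)%g = tV k^-1%g (f y).
  by move=> fV kC; apply: (ind_sp_eqv _ tVl tVm fV kC).
pose psi y X := Phi X y.
have psil y : lin (psi y) by move=> k u v; rewrite /psi Phil !ffunE.
have psiN y n X : y \in K -> n \in N ->
    psi y (X *m (rW n)^T) = psi y X *m (rW (n ^ y)%g)^T.
  move=> yK nN; rewrite /psi -tUN // PhiB ?(subsetP sNB) // ind_actE.
  have -> : (n^-1 * y = y * (n^-1 ^ y))%g by rewrite /conjg !mulgA mulgV mul1g.
  rewrite Veqv //; last by rewrite (subsetP sNC) // memJ_norm ?groupV // (subsetP nNK).
  by rewrite conjVg invgK tVN // memJ_norm // (subsetP nNK).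
have psi0 y X : y \in K -> y \notin C -> psi y X = 0.
  move=> yK yC.
  suff Lz i r : (\matrix_(k, j) psi y (delta_mx i j) r k) = 0.
    rewrite (lin_decomp X (psil y)) big1 // => i _; rewrite big1 // => j _.
    have -> : psi y (delta_mx i j) = 0.
      apply/matrixP => r k; have := congr1 (fun M : 'M[F]_b => M k j) (Lz i r).
      by rewrite !mxE.
    by rewrite scaler0.
  have hL := intertw (N := N) (rW := rW) (R := fun n => rW (n ^ y)%g) i r (psil y)
     (fun n X nN => psiN y n X yK nN).
  case: (schurK hWirr hL) => // uL; exfalso; move/negP: yC; apply.
  exact: (hstab yK uL hL).
have psiN1 n X : n \in N -> psi 1%g (X *m (rW n)^T) = psi 1%g X *m (rW n)^T.
  by move=> nN; rewrite psiN ?group1 // conjg1.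
pose j0 := Ordinal hb.
pose T := \matrix_(r, i) psi 1%g (delta_mx i j0) r j0.
have psi1 X : psi 1%g X = T *m X.
  have h1 i r : (\matrix_(k, j) psi 1%g (delta_mx i j) r k) = (T r i)%:M.
    have hL := intertw (N := N) (rW := rW) (R := rW) i r (psil 1%g) psiN1.
    case: (schurS hWirr hL) => l hl; rewrite hl; congr (_%:M).
    have := congr1 (fun M : 'M[F]_b => M j0 j0) hl; rewrite !mxE eqxx /= mulr1n => <-.
    by [].
  rewrite (lin_decomp X (psil 1%g)) [in RHS](matrix_sum_delta X) mulmx_sumr.
  apply: eq_bigr => i _; rewrite mulmx_sumr; apply: eq_bigr => j _.
  rewrite -scalemxAr; congr (_ *: _).
  apply/matrixP => r k; have := congr1 (fun M : 'M[F]_b => M k j) (h1 i r).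
  rewrite !mxE => ->.
  rewrite (bigD1 i) //= big1 => [|l /negbTE li]; last by rewrite !mxE li mulr0.
  by rewrite !mxE !eqxx /= addr0 mulr_natr eq_sym.
have PhiE X : Phi X = elem_ind C tV 1%g (T *m X).
  apply/ffunP => y; rewrite elem_indE mulg1.
  case yC: (y^-1 \in C)%g.
    have yC' : y \in C by rewrite -groupV.
    have -> : Phi X y = Phi X (1 * y)%g by rewrite mul1g.
    by rewrite Veqv // -psi1.
  have yC' : y \notin C by rewrite -groupV yC.
  case yK: (y \in K); first exact: psi0.
  by apply: Vsupp => //; rewrite yK.
exists T; split.
  move=> k X kB; have kC := subsetP sBC _ kB.
  rewrite -psi1 /psi PhiB // ind_actE mulg1.
  have -> : (k^-1 = 1 * k^-1)%g by rewrite mul1g.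
  by rewrite Veqv ?groupV // invgK -psi1.
move=> g X gA.
have -> : elem_ind B tU g X = ind_act g (e1 X) by rewrite ind_act_elem mulg1.
by rewrite hS // -/(Phi X) PhiE ind_act_elem mulg1.
Qed.
End GL.


Lemma inv_in (gT : finGroupType) (G : {group gT}) (x y : gT) :
  ((x^-1 * y)%g \in G) = ((y^-1 * x)%g \in G).
Proof. by rewrite -groupV invMg invgK. Qed.

Lemma inv3 (gT : finGroupType) (G : {group gT}) (y g k : gT) :
  ((y^-1 * (g * k^-1))%g \in G) = ((k * g^-1 * y)%g \in G).
Proof. by rewrite -groupV !invMg !invgK. Qed.

Section GE.
Variables (F : fieldType) (gT : finGroupType).
Variables (A B C K : {group gT}) (a b c : nat).
Variables (tU : gT -> 'M[F]_(a, b) -> 'M[F]_(a, b)) (tV : gT -> 'M[F]_(c, b) -> 'M[F]_(c, b)).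
Variable T : 'M[F]_(c, a).
Hypotheses (sBC : B \subset C) (sAK : A \subset K).
Hypothesis tUl : forall h, h \in B -> lin (tU h).
Hypothesis tVl : forall h, h \in C -> lin (tV h).
Hypothesis tVm : forall h1 h2 X, h1 \in C -> h2 \in C -> tV (h1 * h2)%g X = tV h1 (tV h2 X).
Hypothesis hT : forall k X, k \in B -> T *m tU k X = tV k (T *m X).
Hypothesis hB : (#|B|%:R : F) != 0.

Let Ut := ind_sp B tU A fullv.
Let Vt := ind_sp C tV K fullv.

Definition Sraw (f : {ffun gT -> 'M[F]_(a, b)}) : {ffun gT -> 'M[F]_(c, b)} :=
  [ffun y => (#|B|%:R)^-1 *: \sum_h
     (if (h^-1 * y)%g \in C then tV (y^-1 * h)%g (T *m f h) else 0)].

Lemma Sraw_lin : lin Sraw.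
Proof.
move=> k f f'; apply/ffunP => y; rewrite !ffunE scalerA mulrC -scalerA -scalerDr.
congr (_ *: _); rewrite scaler_sumr -big_split; apply: eq_bigr => h _ /=.
case: ifP => hC; last by rewrite scaler0 addr0.
rewrite !ffunE mulmxDr -scalemxAr; apply: (tVl _).
by rewrite -inv_in.
Qed.

Lemma Sraw_act x f : Sraw (ind_act x f) = ind_act x (Sraw f).
Proof.
apply/ffunP => y; rewrite !ffunE; congr (_ *: _).
rewrite (reindex_inj (mulgI x)) /=; apply: eq_bigr => h _.
by rewrite !ffunE invMg !mulgA mulVg mul1g invMg invgK.
Qed.

Lemma Sraw_elem g X : Sraw (elem_ind B tU g X) = elem_ind C tV g (T *m X).
Proof.
apply/ffunP => y; rewrite ffunE elem_indE.
have inj : injective (fun k => g * k^-1)%g by move=> k1 k2 /mulgI/invg_inj.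
rewrite (reindex_inj inj) /=.
pose v := if (y^-1 * g)%g \in C then tV (y^-1 * g)%g (T *m X) else 0.
transitivity ((#|B|%:R)^-1 *: \sum_(k in B) v).
  congr (_ *: _); rewrite [RHS]big_mkcond; apply: eq_bigr => k _.
  rewrite elem_indE !invMg invgK mulgKV.
  case kB: (k \in B); last first.
    by case: ifP => // hC; rewrite mulmx0 (lin0 (tVl _)) // inv3.
  have kC := subsetP sBC _ kB.
  rewrite -mulgA (groupMl _ kC) inv_in /v.
  case: ifP => // hC; rewrite hT // -tVm //; last first.
    by rewrite inv3 -mulgA (groupMl _ kC) inv_in.
  by rewrite mulgA mulgKV.
rewrite big_const iter_addr_0 -scaler_nat scalerA mulVf // scale1r.
by rewrite /v -[(y^-1 * g)%g]invgK invMg invgK groupV.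
Qed.

Lemma GE : exists S : 'Hom({ffun gT -> 'M[F]_(a, b)}, {ffun gT -> 'M[F]_(c, b)}),
  is_hom A (@ind_act F gT _) Ut (@ind_act F gT _) Vt S /\
  (forall g X, g \in A -> S (elem_ind B tU g X) = elem_ind C tV g (T *m X)).
Proof.
exists (linfun Sraw); have SE := lfunE' Sraw_lin.
split; last by move=> g X gA; rewrite SE Sraw_elem.
split; last by move=> x v _ _; rewrite !SE Sraw_act.
apply/subvP => _ /memv_imgP[f fU ->]; rewrite SE; move: f fU.
apply: (ind_sp_ind (P := fun f => Sraw f \in Vt)).
- by rewrite (lin0 Sraw_lin) mem0v.
- by move=> k u v hu hv; rewrite Sraw_lin; apply: memvD => //; apply: memvZ.
- move=> g x gA _; rewrite Sraw_elem; apply: mem_ind_sp => //.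
  + exact: (subsetP sAK).
  + exact: memvf.
Qed.

End GE.


Section Irr.
Variables (F : fieldType) (gT : finGroupType) (V0 : vectType F) (H : {group gT}).

Lemma sum_reindexH (W : vectType F) x (Fh : gT -> W) : x \in H ->
  \sum_(h in H) Fh h = \sum_(h in H) Fh (x * h)%g.
Proof.
move=> xH; rewrite !(big_mkcond (fun h => h \in H)) (reindex_inj (mulgI x)) /=.
by apply: eq_bigr => h _; rewrite groupMl.
Qed.

Lemma irr_of_end (Ut : {vspace {ffun gT -> V0}}) :
  (#|H|%:R : F) != 0 -> Ut != 0%VS -> stable_sp H (@ind_act F gT V0) Ut ->
  (forall S : 'End({ffun gT -> V0}),
     is_hom H (@ind_act F gT V0) Ut (@ind_act F gT V0) Ut S ->
     exists l, forall f, f \in Ut -> S f = l *: f) ->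
  irr_mod H (@ind_act F gT V0) Ut.
Proof.
move=> hH nU stU hE; split => // M' sM stM.
pose Praw f := (#|H|%:R)^-1 *: \sum_(h in H) ind_act h (projv M' (ind_act h^-1 f)).
have Pl : lin Praw.
  move=> k f f'; rewrite /Praw scalerA mulrC -scalerA -scalerDr; congr (_ *: _).
  rewrite scaler_sumr -big_split; apply: eq_bigr => h _ /=.
  by rewrite (ind_act_lin h^-1) linearD linearZ (ind_act_lin h).
have PE := lfunE' Pl.
have PM f : Praw f \in M'.
  apply: memvZ; apply: memv_suml => h hh; apply: stM => //; exact: memv_proj.
have [l hl] : exists l, forall f, f \in Ut -> linfun Praw f = l *: f.
  apply: hE; split.
    by apply/subvP => _ /memv_imgP[f _ ->]; rewrite PE; apply: (subvP sM).
  move=> x v xH vU; rewrite !PE /Praw.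
  rewrite (linZ (ind_act_lin x)) (lin_sum _ _ _ (ind_act_lin x)); congr (_ *: _).
  rewrite [LHS](sum_reindexH _ xH); apply: eq_bigr => h _.
  by rewrite invMg ind_actM -mulgA mulVg mulg1 ind_actM.
have [->|nM] := eqVneq M' 0%VS; first by left.
right; apply/eqP; rewrite eqEsubv sM /=.
have Pid f : f \in M' -> Praw f = f.
  move=> fM; rewrite /Praw (eq_bigr (fun=> f)) => [|h hh].
    by rewrite sumr_const -scaler_nat scalerA mulVf // scale1r.
  by rewrite projv_id ?ind_actM ?mulgV ?ind_act1 //; apply: stM; rewrite ?groupV.
have l1 : l = 1.
  have v0 := memv_pick M'; have nv : vpick M' != 0 by rewrite vpick0.
  have := hl _ (subvP sM _ v0); rewrite PE Pid // => /eqP.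
  rewrite -subr_eq0 -{1}[vpick M']scale1r -scalerBl scaler_eq0 (negbTE nv) orbF.
  by rewrite subr_eq0 eq_sym => /eqP.
apply/subvP => f fU; rewrite -[f]scale1r -l1 -hl // PE; exact: PM.
Qed.
End Irr.


Section Setup.
Variables (F : closedFieldType) (gT : finGroupType) (G Q N : {group gT}).
Hypothesis hG : (N ><| Q)%g = G.

Lemma nQN : Q \subset ('N(N))%g.
Proof. by case: (sdprod_context hG). Qed.
Lemma tiQN : (Q :&: N = 1)%g.
Proof. by case: (sdprod_context hG) => _ _ _ _; rewrite setIC. Qed.
Lemma nsNG : (N <| G)%g.
Proof. by case: (sdprod_context hG). Qed.
Lemma sQG : Q \subset G.
Proof. by case: (sdprod_context hG). Qed.
Lemma sNG : N \subset G.
Proof. by case/andP: nsNG. Qed.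
Lemma nNG : G \subset ('N(N))%g.
Proof. by case/andP: nsNG. Qed.
Lemma GQN : G :=: (Q * N)%g.
Proof. by case: (sdprod_context hG) => _ _ <- _ _; rewrite (normC nQN). Qed.

Lemma divgr_mul x y : x \in (Q * N)%g -> y \in (Q * N)%g ->
  divgr Q N (x * y) = (divgr Q N x * divgr Q N y)%g.
Proof.
case/mulsgP=> q1 n1 q1Q n1N ->; case/mulsgP=> q2 n2 q2Q n2N ->.
have -> : (q1 * n1 * (q2 * n2) = (q1 * q2) * (n1 ^ q2 * n2))%g.
  by rewrite conjgE !mulgA mulgK.
have nN : (n1 ^ q2 * n2)%g \in N.
  by rewrite groupM // memJ_norm // (subsetP nQN).
by rewrite (divgrMid tiQN q1Q n1N) (divgrMid tiQN q2Q n2N) (divgrMid tiQN (groupM q1Q q2Q) nN).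
Qed.

Lemma divgr_in (H : {group gT}) x : H \subset Q -> x \in (H * N)%g -> divgr Q N x \in H.
Proof.
move=> sHQ /mulsgP[q n qH nN ->]; rewrite divgrMid //; first exact: tiQN.
exact: (subsetP sHQ).
Qed.

Lemma divgr_N n : n \in N -> divgr Q N n = 1%g.
Proof. by move=> nN; rewrite -[n]mul1g divgrMid ?tiQN. Qed.

Lemma divgr_Q q : q \in Q -> divgr Q N q = q.
Proof. exact: divgr_id. Qed.

Lemma joinN (H : {group gT}) : H \subset Q -> (H <*> N)%g = (H * N)%g :> {set gT}.
Proof. by move=> sHQ; rewrite norm_joinEl // (subset_trans sHQ nQN). Qed.

Section Tens.
Variables (H : {group gT}) (m b : nat) (r : mx_representation F H m).
Variables (E : {group gT}) (rWe : mx_representation F E b) (rW : gT -> 'M[F]_b).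
Hypothesis sHQ : H \subset Q.
Hypothesis sHNE : (H <*> N)%g \subset E.
Hypothesis hWe : forall n, n \in N -> rWe n = rW n.

Lemma tens_lin x : lin (tens_act Q N r rWe x).
Proof. by move=> k X Y; rewrite /tens_act mulmxDr mulmxDl -!scalemxAr -scalemxAl. Qed.

Lemma tens_mul h1 h2 X : h1 \in (H <*> N)%g -> h2 \in (H <*> N)%g ->
  tens_act Q N r rWe (h1 * h2)%g X = tens_act Q N r rWe h1 (tens_act Q N r rWe h2 X).
Proof.
move=> h1H h2H; rewrite /tens_act.
have sHQN : (H * N)%g \subset (Q * N)%g by rewrite mulSg.
rewrite (joinN sHQ) in h1H h2H.
rewrite divgr_mul ?(subsetP sHQN) //.
rewrite (repr_mxM r (divgr_in sHQ h1H) (divgr_in sHQ h2H)).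
have h1E : h1 \in E by apply: (subsetP sHNE); rewrite (joinN sHQ).
have h2E : h2 \in E by apply: (subsetP sHNE); rewrite (joinN sHQ).
by rewrite (repr_mxM rWe h1E h2E) trmx_mul !mulmxA.
Qed.

Lemma tens_N n X : n \in N -> tens_act Q N r rWe n X = X *m (rW n)^T.
Proof. by move=> nN; rewrite /tens_act divgr_N // repr_mx1 mul1mx hWe. Qed.

End Tens.
End Setup.


Section Tsp.
Variables (F : fieldType) (m n : nat).

Lemma mem_tens_sp (M1 : {vspace 'cV[F]_m}) (M2 : {vspace 'cV[F]_n}) v w :
  v \in M1 -> w \in M2 -> v *m w^T \in tens_sp M1 M2.
Proof.
move=> vM wM.
have hb v' w' : v' \in vbasis M1 -> w' \in vbasis M2 -> v' *m w'^T \in tens_sp M1 M2.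
  move=> vb wb; apply: memv_span; apply/allpairsP; exists (v', w'); split => //.
have hw v' : v' \in vbasis M1 -> v' *m w^T \in tens_sp M1 M2.
  move=> vb; rewrite (coord_vbasis wM) linear_sum mulmx_sumr /=; apply: memv_suml => j _.
  rewrite linearZ /= -scalemxAr; apply: memvZ; apply: hb => //.
  by apply: mem_nth; rewrite size_tuple.
rewrite (coord_vbasis vM) mulmx_suml; apply: memv_suml => i _.
rewrite -scalemxAl; apply: memvZ; apply: hw.
by apply: mem_nth; rewrite size_tuple.
Qed.

Lemma tens_sp_ind (M1 : {vspace 'cV[F]_m}) (M2 : {vspace 'cV[F]_n}) (P : 'M[F]_(m, n) -> Prop) :
  P 0 -> (forall k u v, P u -> P v -> P (k *: u + v)) ->
  (forall v w, v \in M1 -> w \in M2 -> P (v *m w^T)) ->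
  forall x, x \in tens_sp M1 M2 -> P x.
Proof.
move=> P0 Pl Pg; apply: span_ind => // x /allpairsP[[v w] /= [vb wb ->]].
by apply: Pg; apply: vbasis_mem.
Qed.

Lemma tens_sp_mono (M1 M1' : {vspace 'cV[F]_m}) (M2 : {vspace 'cV[F]_n}) :
  (M1 <= M1')%VS -> (tens_sp M1 M2 <= tens_sp M1' M2)%VS.
Proof.
move=> s; apply/subvP; apply: (tens_sp_ind (P := fun x => x \in tens_sp M1' M2)).
- exact: mem0v.
- by move=> k u v hu hv; apply: memvD => //; apply: memvZ.
- by move=> v w vM wM; apply: mem_tens_sp => //; apply: (subvP s).
Qed.
End Tsp.

Section IsoSym.
Variables (F : fieldType) (gT : finGroupType) (V1 V2 : vectType F).

Lemma iso_sym (H : {set gT}) (act1 : gT -> V1 -> V1) (M1 : {vspace V1})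
    (act2 : gT -> V2 -> V2) (M2 : {vspace V2}) (f : 'Hom(V1, V2)) :
  stable_sp H act1 M1 -> is_hom H act1 M1 act2 M2 f -> (f @: M1)%VS = M2 ->
  \dim (f @: M1) = \dim M1 ->
  exists g : 'Hom(V2, V1), [/\ is_hom H act2 M2 act1 M1 g, (g @: M2)%VS = M1,
     \dim (g @: M2) = \dim M2, (forall x, x \in M1 -> g (f x) = x)
   & (forall y, y \in M2 -> f (g y) = y)].
Proof.
move=> stM [sf hf] fM dimf.
have ker0 : (M1 :&: lker f = 0)%VS.
  have := limg_ker_dim f M1; rewrite dimf => e.
  by apply/eqP; rewrite -dimv_eq0 -(eqn_add2r (\dim M1)) e add0n.
pose h := (f \o projv M1)%VF.
pose g := (projv M1 \o h^-1)%VF.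
have gM y : g y \in M1 by rewrite comp_lfunE memv_proj.
have fg y : y \in M2 -> f (g y) = y.
  rewrite -fM => /memv_imgP[x xM ->].
  have hl : f x \in limg h.
    by apply/memv_imgP; exists x; rewrite ?memvf // comp_lfunE projv_id.
  by rewrite comp_lfunE -[f (projv _ _)]comp_lfunE -/h limg_lfunVK.
have gf x : x \in M1 -> g (f x) = x.
  move=> xM; have e : f (g (f x)) = f x by apply: fg; rewrite -fM memv_img.
  apply/eqP; rewrite -subr_eq0 -memv0 -ker0 memv_cap memvB ?gM //=.
  by rewrite memv_ker linearB /= e subrr.
have gM2 : (g @: M2)%VS = M1.
  apply/eqP; rewrite eqEsubv; apply/andP; split.
    by apply/subvP => _ /memv_imgP[y _ ->].
  by apply/subvP => x xM; rewrite -(gf x xM) memv_img // -fM memv_img.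
exists g; split => //.
- split; first by rewrite gM2.
  move=> x y xH; rewrite -fM => /memv_imgP[z zM ->].
  by rewrite -hf // !gf // stM.
- by rewrite gM2 -dimf fM.
Qed.
End IsoSym.


Section Main.
Variables (F : closedFieldType) (gT : finGroupType) (G Q N Q1 Q2 : {group gT}).
Hypothesis hchar : [pchar F] =i pred0.
Hypothesis hG : (N ><| Q)%g = G.
Variables (a b c : nat) (rW : mx_representation F N b).
Hypothesis hWirr : irr_mod N (mxact rW) fullv.
Hypothesis hQ1 : Q1 \subset Q.
Hypothesis hQ2 : forall q, q \in Q2 <-> q \in Q /\ mxrep_iso N (fun n => rW (n ^ q)%g) rW.
Variable rWe : mx_representation F (Q2 <*> N)%g b.
Hypothesis hWe : forall n, n \in N -> rWe n = rW n.
Variable rU : mx_representation F (Q1 :&: Q2)%g a.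
Hypothesis hUirr : irr_mod (Q1 :&: Q2)%g (mxact rU) fullv.
Variable rV : mx_representation F Q2 c.
Hypothesis hVirr : irr_mod Q2 (mxact rV) fullv.

Local Notation Q3 := (Q1 :&: Q2)%G.
Local Notation Q1N := (Q1 <*> N)%G.
Local Notation Q2N := (Q2 <*> N)%G.
Local Notation Q3N := (Q3 <*> N)%G.
Local Notation tU := (tens_act Q N rU rWe).
Local Notation tV := (tens_act Q N rV rWe).

Lemma cardF (H : {group gT}) : (#|H|%:R : F) != 0.
Proof. by move/pcharf0P: hchar => ->; rewrite -lt0n cardG_gt0. Qed.

Lemma pos_irr (H : {set gT}) n (r : gT -> 'M[F]_n) : irr_mod H (mxact r) fullv -> (0 < n)%N.
Proof.
case=> nz _; rewrite lt0n; move: nz; apply: contraNneq => n0.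
by rewrite -dimv_eq0 dimvf dim_matrix n0.
Qed.

Lemma sQ2Q : Q2 \subset Q.
Proof. by apply/subsetP => q /hQ2[]. Qed.
Lemma sQ3Q : Q3 \subset Q.
Proof. exact: subset_trans (subsetIl _ _) hQ1. Qed.
Lemma sQ3Q2 : Q3 \subset Q2. Proof. exact: subsetIr. Qed.
Lemma sQ3Q1 : Q3 \subset Q1. Proof. exact: subsetIl. Qed.

Lemma joinS (H1 H2 : {group gT}) : H1 \subset H2 -> (H1 <*> N)%G \subset (H2 <*> N)%G.
Proof. by move=> s; rewrite join_subG (subset_trans s (joing_subl _ _)) joing_subr. Qed.

Lemma sNjoin (H1 : {group gT}) : N \subset (H1 <*> N)%G.
Proof. exact: joing_subr. Qed.

Lemma sjoinG (H1 : {group gT}) : H1 \subset Q -> (H1 <*> N)%G \subset G.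
Proof. by move=> s; rewrite join_subG (subset_trans s (sQG hG)) (sNG hG). Qed.

Lemma njoin (H1 : {group gT}) : H1 \subset Q -> (H1 <*> N)%G \subset ('N(N))%g.
Proof. move=> s; exact: subset_trans (sjoinG s) (nNG hG). Qed.

Lemma stab q m (L : 'M[F]_b) : q \in Q -> m \in N -> L \in unitmx ->
  (forall n, n \in N -> L *m rW n = rW (n ^ (q * m))%g *m L) -> q \in Q2.
Proof.
move=> qQ mN uL hL; apply/hQ2; split => //.
exists (rW m *m L); first by rewrite unitmx_mul repr_mx_unit.
move=> n nN; have nqN : (n ^ q)%g \in N by rewrite memJ_norm // (subsetP (nQN hG)).
rewrite -mulmxA hL // conjgM conjgE.
rewrite (repr_mxM rW (groupVr mN) (groupM nqN mN)) (repr_mxM rW nqN mN).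
by rewrite repr_mxV // !mulmxA mulmxV ?repr_mx_unit // mul1mx.
Qed.


Lemma mx_ext m n p (M1 M2 : 'M[F]_(m, n)) : (0 < p)%N ->
  (forall Y : 'M[F]_(n, p), M1 *m Y = M2 *m Y) -> M1 = M2.
Proof.
move=> hp hY; apply/matrixP => i j; pose j0 := Ordinal hp.
have := congr1 (fun M : 'M[F]_(m, p) => M i j0) (hY (delta_mx j j0)).
rewrite !mxE (bigD1 j) //= big1 => [|l /negbTE lj]; last by rewrite mxE lj mulr0.
rewrite (bigD1 j) //= big1 => [|l /negbTE lj]; last by rewrite mxE lj mulr0.
by rewrite !mxE !eqxx !mulr1 !addr0.
Qed.

Lemma homT_of a' c' (r1 : gT -> 'M[F]_a') (r2 : gT -> 'M[F]_c') (T : 'M[F]_(c', a')) x :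
  x \in Q -> x \in Q2N ->
  (forall X, T *m tens_act Q N r1 rWe x X = tens_act Q N r2 rWe x (T *m X)) ->
  T *m r1 x = r2 x *m T.
Proof.
move=> xQ xE hT; have hb := pos_irr hWirr.
have uW : (rWe x)^T \in unitmx by rewrite unitmx_tr repr_mx_unit.
apply: (mx_ext hb) => Y; have := hT (Y *m invmx (rWe x)^T).
by rewrite /tens_act divgr_Q // !mulmxA !(mulmxKV uW).
Qed.

Lemma tUlin x : lin (tU x). Proof. exact: (tens_lin Q N rU rWe x). Qed.
Lemma tVlin x : lin (tV x). Proof. exact: (tens_lin Q N rV rWe x). Qed.
Lemma tUmul h1 h2 X : h1 \in Q3N -> h2 \in Q3N -> tU (h1 * h2)%g X = tU h1 (tU h2 X).
Proof. exact: (tens_mul hG rU rWe sQ3Q (joinS sQ3Q2)). Qed.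
Lemma tVmul h1 h2 X : h1 \in Q2N -> h2 \in Q2N -> tV (h1 * h2)%g X = tV h1 (tV h2 X).
Proof. exact: (tens_mul hG rV rWe sQ2Q (subxx _)). Qed.
Lemma tUN n X : n \in N -> tU n X = X *m (rW n)^T.
Proof. exact: (tens_N hG rU hWe). Qed.
Lemma tVN n X : n \in N -> tV n X = X *m (rW n)^T.
Proof. exact: (tens_N hG rV hWe). Qed.

Lemma stabG y (L : 'M[F]_b) : y \in G -> L \in unitmx ->
  (forall n, n \in N -> L *m rW n = rW (n ^ y)%g *m L) -> y \in Q2N.
Proof.
rewrite (GQN hG) => /mulsgP[q m qQ mN ->] uL hL.
by rewrite /= (joinN hG sQ2Q) mem_mulg // (stab qQ mN uL hL).
Qed.

Lemma stabQ1 y (L : 'M[F]_b) : y \in Q1N -> L \in unitmx ->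
  (forall n, n \in N -> L *m rW n = rW (n ^ y)%g *m L) -> y \in Q3N.
Proof.
rewrite /= (joinN hG hQ1) => /mulsgP[q m qQ mN ->] uL hL.
have qQ' := subsetP hQ1 _ qQ.
by rewrite (joinN hG sQ3Q) mem_mulg // inE qQ (stab qQ' mN uL hL).
Qed.


Local Notation Ut := (ind_sp Q3N tU Q1N fullv).
Local Notation Vt := (ind_sp Q2N tV G fullv).

Lemma surjI (S : 'Hom({ffun gT -> 'M[F]_(a, b)}, {ffun gT -> 'M[F]_(c, b)})) :
  is_hom Q1N (@ind_act F gT _) Ut (@ind_act F gT _) Vt S ->
  exists T : 'M[F]_(c, a),
    (forall k X, k \in Q3N -> T *m tU k X = tV k (T *m X)) /\
    (forall g X, g \in Q1N -> S (elem_ind Q3N tU g X) = elem_ind Q2N tV g (T *m X)).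
Proof.
exact: (GL hWirr (joinS sQ3Q1) (joinS sQ3Q2) (sjoinG sQ2Q) (sNjoin _) (nNG hG)
  (fun h _ => tUlin h) (fun h _ => tVlin h) tUmul tVmul tUN tVN stabG).
Qed.

Lemma surjU (S : 'End({ffun gT -> 'M[F]_(a, b)})) :
  is_hom Q1N (@ind_act F gT _) Ut (@ind_act F gT _) Ut S ->
  exists T : 'M[F]_(a, a),
    (forall k X, k \in Q3N -> T *m tU k X = tU k (T *m X)) /\
    (forall g X, g \in Q1N -> S (elem_ind Q3N tU g X) = elem_ind Q3N tU g (T *m X)).
Proof.
exact: (GL hWirr (joinS sQ3Q1) (subxx _) (joinS sQ3Q1) (sNjoin _) (njoin hQ1)
  (fun h _ => tUlin h) (fun h _ => tUlin h) tUmul tUmul tUN tUN stabQ1).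
Qed.

Lemma stabGG y (L : 'M[F]_b) : y \in G -> L \in unitmx ->
  (forall n, n \in N -> L *m rW n = rW (n ^ y)%g *m L) -> y \in Q2N.
Proof. exact: stabG. Qed.

Lemma surjV (S : 'End({ffun gT -> 'M[F]_(c, b)})) :
  is_hom G (@ind_act F gT _) Vt (@ind_act F gT _) Vt S ->
  exists T : 'M[F]_(c, c),
    (forall k X, k \in Q2N -> T *m tV k X = tV k (T *m X)) /\
    (forall g X, g \in G -> S (elem_ind Q2N tV g X) = elem_ind Q2N tV g (T *m X)).
Proof.
exact: (GL hWirr (sjoinG sQ2Q) (subxx _) (sjoinG sQ2Q) (sNjoin _) (nNG hG)
  (fun h _ => tVlin h) (fun h _ => tVlin h) tVmul tVmul tVN tVN stabG).
Qed.


Lemma ind_nz m (H K : {group gT}) (rho : gT -> 'M[F]_(m, b) -> 'M[F]_(m, b)) (X : 'M[F]_(m, b)) :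
  (forall h, h \in H -> lin (rho h)) -> rho 1%g X = X -> X != 0 ->
  ind_sp H rho K fullv != 0%VS.
Proof.
move=> hl h1 nX; apply/negP => /eqP I0.
have := mem_ind_sp hl (group1 K) (memvf X); rewrite I0 memv0 => /eqP/ffunP/(_ 1%g).
rewrite elem_indE mulg1 invg1 group1 h1 ffunE => X0.
by move/negP: nX; apply; rewrite X0.
Qed.

Lemma delta_nz m n (hm : (0 < m)%N) (hn : (0 < n)%N) :
  (delta_mx (Ordinal hm) (Ordinal hn) : 'M[F]_(m, n)) != 0.
Proof. by apply/negP => /eqP/matrixP/(_ (Ordinal hm) (Ordinal hn)); rewrite !mxE !eqxx /= => /eqP; rewrite oner_eq0. Qed.

Lemma tU1 X : tU 1%g X = X.
Proof. by rewrite tUN // repr_mx1 trmx1 mulmx1. Qed.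
Lemma tV1 X : tV 1%g X = X.
Proof. by rewrite tVN // repr_mx1 trmx1 mulmx1. Qed.

Lemma scal_end m (H K : {group gT}) (rho : gT -> 'M[F]_(m, b) -> 'M[F]_(m, b))
    (S : 'End({ffun gT -> 'M[F]_(m, b)})) l :
  (forall h, h \in H -> lin (rho h)) ->
  (forall g X, g \in K -> S (elem_ind H rho g X) = elem_ind H rho g (l%:M *m X)) ->
  forall f, f \in ind_sp H rho K fullv -> S f = l *: f.
Proof.
move=> hl hS; apply: (ind_sp_ind (P := fun f => S f = l *: f)).
- by rewrite linear0 scaler0.
- by move=> k u v hu hv; rewrite linearD linearZ /= hu hv scalerDr !scalerA mulrC.
- by move=> g x gK _; rewrite hS // mul_scalar_mx (linZ (elem_ind_lin g hl)).
Qed.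

Lemma irrU : irr_mod Q1N (@ind_act F gT _) Ut.
Proof.
have ha := pos_irr hUirr; have hb := pos_irr hWirr.
apply: irr_of_end; first exact: cardF.
- apply: (ind_nz Q1N (X := delta_mx (Ordinal ha) (Ordinal hb))).
  + by move=> h _; apply: tUlin.
  + exact: tU1.
  + exact: delta_nz.
- exact: ind_sp_stable.
move=> S hS; have [T [hT hS']] := surjU hS.
have hTU x : x \in Q3 -> T *m rU x = rU x *m T.
  move=> xQ3; apply: homT_of.
  - exact: (subsetP sQ3Q).
  - by apply: (subsetP (joinS sQ3Q2)); apply: (subsetP (joing_subl _ _)).
  - by move=> X; apply: hT; apply: (subsetP (joing_subl _ _)).
have [l hl] := schurS hUirr hTU.
exists l; apply: (scal_end (fun h _ => tUlin h)) => g X gK.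
by rewrite hS' // hl.
Qed.

Lemma irrV : irr_mod G (@ind_act F gT _) Vt.
Proof.
have hc := pos_irr hVirr; have hb := pos_irr hWirr.
apply: irr_of_end; first exact: cardF.
- apply: (ind_nz G (X := delta_mx (Ordinal hc) (Ordinal hb))).
  + by move=> h _; apply: tVlin.
  + exact: tV1.
  + exact: delta_nz.
- exact: ind_sp_stable.
move=> S hS; have [T [hT hS']] := surjV hS.
have hTV x : x \in Q2 -> T *m rV x = rV x *m T.
  move=> xQ2; apply: homT_of.
  - exact: (subsetP sQ2Q).
  - exact: (subsetP (joing_subl _ _)).
  - by move=> X; apply: hT; apply: (subsetP (joing_subl _ _)).
have [l hl] := schurS hVirr hTV.
exists l; apply: (scal_end (fun h _ => tVlin h)) => g X gK.
by rewrite hS' // hl.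
Qed.


Definition homT (T : 'M[F]_(c, a)) := forall x, x \in Q3 -> T *m rU x = rV x *m T.
Definition tilde (T : 'M[F]_(c, a))
   (S : 'Hom({ffun gT -> 'M[F]_(a, b)}, {ffun gT -> 'M[F]_(c, b)})) :=
  forall g (u : 'cV[F]_a) (w : 'cV[F]_b), g \in Q1N ->
    S (elem_ind Q3N tU g (u *m w^T)) = elem_ind Q2N tV g ((T *m u) *m w^T).

Lemma homT_rel T : homT T -> forall k X, k \in Q3N -> T *m tU k X = tV k (T *m X).
Proof.
move=> hT k X kQ; rewrite /tens_act.
have dQ3 : divgr Q N k \in Q3 by apply: (divgr_in hG sQ3Q); rewrite -(joinN hG sQ3Q).
by rewrite !mulmxA hT.
Qed.

Lemma exist3 T : homT T -> exists S, is_hom Q1N (@ind_act F gT _) Ut (@ind_act F gT _) Vt S /\ tilde T S.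
Proof.
move=> hT.
have [S [hS hSe]] := GE (joinS sQ3Q2) (sjoinG hQ1) (fun h _ => tVlin h) tVmul
   (homT_rel hT) (cardF Q3N).
exists S; split => // g u w gA; rewrite hSe // mulmxA; reflexivity.
Qed.

Lemma tilde_all T S : tilde T S -> forall g X, g \in Q1N ->
  S (elem_ind Q3N tU g X) = elem_ind Q2N tV g (T *m X).
Proof.
move=> hT g X gA; move: X.
apply: (outer_ind (P := fun X => S (elem_ind Q3N tU g X) = elem_ind Q2N tV g (T *m X))).
- by rewrite mulmx0 (lin0 (elem_ind_lin _ (fun h _ => tUlin h))) (lin0 (elem_ind_lin _ (fun h _ => tVlin h))) linear0.
- move=> k u v hu hv; rewrite (elem_ind_lin _ (fun h _ => tUlin h)) linearD linearZ /= hu hv.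
  by rewrite mulmxDr -scalemxAr (elem_ind_lin _ (fun h _ => tVlin h)).
- by move=> u w; rewrite hT // mulmxA.
Qed.

Lemma uniq3 T S S' : tilde T S -> tilde T S' -> forall f, f \in Ut -> S f = S' f.
Proof.
move=> h1 h2; apply: (ind_sp_ind (P := fun f => S f = S' f)).
- by rewrite !linear0.
- by move=> k u v hu hv; rewrite !linearD !linearZ /= hu hv.
- by move=> g x gA _; rewrite (tilde_all h1) // (tilde_all h2).
Qed.

Lemma inj4 T T' S : tilde T S -> tilde T' S -> T = T'.
Proof.
move=> h1 h2; apply: (mx_ext (pos_irr hWirr)) => X.
have := congr1 (fun f : {ffun gT -> 'M[F]_(c, b)} => f 1%g)
  (etrans (esym (tilde_all h1 X (group1 _))) (tilde_all h2 X (group1 _))).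
by rewrite !elem_indE mulg1 invg1 group1 !tV1.
Qed.

Lemma surj4 S : is_hom Q1N (@ind_act F gT _) Ut (@ind_act F gT _) Vt S ->
  exists T, homT T /\ tilde T S.
Proof.
move=> hS; have [T [hT hS']] := surjI hS; exists T; split.
  move=> x xQ3; apply: homT_of.
  - exact: (subsetP sQ3Q).
  - by apply: (subsetP (joinS sQ3Q2)); apply: (subsetP (joing_subl _ _)).
  - by move=> X; apply: hT; apply: (subsetP (joing_subl _ _)).
by move=> g u w gA; rewrite hS' // mulmxA.
Qed.


Local Notation Cf M := (ind_sp Q2N tV Q1N (tens_sp M fullv)).

Lemma eVlin : forall h, h \in Q2N -> lin (tV h). Proof. by move=> h _; apply: tVlin. Qed.
Lemma eUlin : forall h, h \in Q3N -> lin (tU h). Proof. by move=> h _; apply: tUlin. Qed.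

Lemma Cf_mono (M M' : {vspace 'cV[F]_c}) : (M <= M')%VS -> (Cf M <= Cf M')%VS.
Proof. by move=> s; apply: ind_sp_mono eVlin (subxx _) (tens_sp_mono _ s). Qed.

Lemma Cf_add (M M' : {vspace 'cV[F]_c}) : Cf (M + M')%VS = (Cf M + Cf M')%VS.
Proof.
apply/eqP; rewrite eqEsubv; apply/andP; split; last first.
  by rewrite subv_add !Cf_mono // ?addvSl ?addvSr.
apply/subvP; apply: (ind_sp_ind (P := fun f => f \in (Cf M + Cf M')%VS)).
- exact: mem0v.
- by move=> k u v hu hv; apply: memvD => //; apply: memvZ.
move=> g x gA /vbasis_mem; move: x.
apply: (tens_sp_ind (P := fun x => elem_ind Q2N tV g x \in (Cf M + Cf M')%VS)).
- by rewrite (lin0 (elem_ind_lin _ eVlin)) mem0v.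
- by move=> k u v hu hv; rewrite (elem_ind_lin _ eVlin); apply: memvD => //; apply: memvZ.
move=> v w /memv_addP[v1 v1M [v2 v2M ->]] _.
rewrite mulmxDl (linD (elem_ind_lin _ eVlin)); apply: memv_add.
  by apply: mem_ind_sp eVlin gA _; apply: mem_tens_sp; rewrite ?memvf.
by apply: mem_ind_sp eVlin gA _; apply: mem_tens_sp; rewrite ?memvf.
Qed.

Lemma Cf_0 : Cf 0%VS = 0%VS.
Proof.
apply/eqP; rewrite -subv0; apply/subvP.
apply: (ind_sp_ind (P := fun f => f \in 0%VS)).
- exact: mem0v.
- by move=> k u v hu hv; apply: memvD => //; apply: memvZ.
move=> g x gA /vbasis_mem; move: x.
apply: (tens_sp_ind (P := fun x => elem_ind Q2N tV g x \in 0%VS)).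
- by rewrite (lin0 (elem_ind_lin _ eVlin)) mem0v.
- by move=> k u v hu hv; rewrite (elem_ind_lin _ eVlin); apply: memvD => //; apply: memvZ.
move=> v w; rewrite memv0 => /eqP-> _.
by rewrite mul0mx (lin0 (elem_ind_lin _ eVlin)) mem0v.
Qed.

Lemma Cf_sum (s : seq {vspace 'cV[F]_c}) :
  Cf (\sum_(X <- s) X)%VS = (\sum_(X <- s) Cf X)%VS.
Proof.
elim: s => [|X s IH]; first by rewrite !big_nil Cf_0.
by rewrite !big_cons Cf_add IH.
Qed.

Lemma outer_col (hb : (0 < b)%N) m (v : 'cV[F]_m) :
  v *m (delta_mx (Ordinal hb) 0 : 'cV[F]_b)^T = 0 -> v = 0.
Proof.
move=> e; have : (v *m (delta_mx (Ordinal hb) 0 : 'cV[F]_b)^T) *m delta_mx (Ordinal hb) 0 = v.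
  rewrite -mulmxA trmx_delta mul_delta_mx.
  by rewrite -[RHS]mulmx1; congr (_ *m _); apply/matrixP => i j; rewrite !ord1 !mxE.
by rewrite e mul0mx => <-.
Qed.

Lemma iso_part (X : {vspace 'cV[F]_c}) : stable_sp Q3 (mxact rV) X ->
  iso_mod Q3 (mxact rV) X (mxact rU) fullv ->
  iso_mod Q1N (@ind_act F gT _) (Cf X) (@ind_act F gT _) Ut.
Proof.
move=> stX [f [hf fX dimf]].
have [g [hg gU dimg gf fg]] := iso_sym stX hf fX dimf.
have [T' hT'] := hom_to_mx (lin_hom g).
have ha := pos_irr hUirr; have hb := pos_irr hWirr.
have gX u : g u \in X by rewrite -gU memv_img ?memvf.
have homT' : homT T'.
  move=> x xQ3; apply: (mx_ext (ltn0Sn 0)) => u.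
  rewrite -!mulmxA -!hT'; case: hg => _ hg; rewrite -[rU x *m u]/(mxact rU x u) hg //.
  exact: memvf.
have [S [hS tS]] := exist3 homT'.
have TX Y : T' *m Y \in tens_sp X fullv.
  move: Y; apply: (outer_ind (P := fun Y => T' *m Y \in tens_sp X fullv)).
  - by rewrite mulmx0 mem0v.
  - by move=> k u v hu hv; rewrite mulmxDr -scalemxAr; apply: memvD => //; apply: memvZ.
  - by move=> u w; rewrite mulmxA -hT'; apply: mem_tens_sp; rewrite ?memvf.
have imS : (S @: Ut)%VS = Cf X.
  apply/eqP; rewrite eqEsubv; apply/andP; split.
    apply/subvP => _ /memv_imgP[f0 fU ->]; move: f0 fU.
    apply: (ind_sp_ind (P := fun f0 => S f0 \in Cf X)).
    - by rewrite linear0 mem0v.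
    - by move=> k u v hu hv; rewrite linearD linearZ /=; apply: memvD => //; apply: memvZ.
    - move=> g0 x gA _; rewrite (tilde_all tS) //; apply: mem_ind_sp; [exact: eVlin | exact: gA | exact: TX].
  apply/subvP; apply: (ind_sp_ind (P := fun f0 => f0 \in (S @: Ut)%VS)).
  - exact: mem0v.
  - by move=> k u v hu hv; apply: memvD => //; apply: memvZ.
  move=> g0 x gA /vbasis_mem; move: x.
  apply: (tens_sp_ind (P := fun x => elem_ind Q2N tV g0 x \in (S @: Ut)%VS)).
  - by rewrite (lin0 (elem_ind_lin _ eVlin)) mem0v.
  - by move=> k u v hu hv; rewrite (elem_ind_lin _ eVlin); apply: memvD => //; apply: memvZ.
  move=> v w vX _; rewrite -(gf v vX) hT' -mulmxA -(tilde_all tS) //.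
  by apply: memv_img; apply: mem_ind_sp eUlin gA (memvf _).
have ker0 : (Ut :&: lker S = 0)%VS.
  have stK : stable_sp Q1N (@ind_act F gT _) (Ut :&: lker S)%VS.
    have hst : stable_sp Q1N (@ind_act F gT _) Ut by exact: ind_sp_stable.
    move=> x v xA /memv_capP[vU vK]; rewrite memv_cap (hst x v xA vU) /=.
    rewrite memv_ker; case: hS => _ hS; rewrite hS //.
    by move: vK; rewrite memv_ker => /eqP->; rewrite (lin0 (ind_act_lin x)).
  case: irrU => _ /(_ _ (capvSl _ _) stK) [//|KU]; exfalso.
  have gz u : g u = 0.
    pose w0 : 'cV[F]_b := delta_mx (Ordinal hb) 0.
    have : elem_ind Q3N tU 1%g (u *m w0^T) \in (Ut :&: lker S)%VS.
      by rewrite KU; apply: mem_ind_sp eUlin (group1 _) (memvf _).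
    rewrite memv_cap memv_ker => /andP[_ /eqP].
    rewrite (tilde_all tS) ?group1 // => /ffunP/(_ 1%g).
    rewrite elem_indE mulg1 invg1 group1 tV1 ffunE mulmxA -hT'.
    exact: outer_col.
  have g0 : (g @: fullv = 0)%VS.
    by apply/eqP; rewrite -subv0; apply/subvP => _ /memv_imgP[u _ ->]; rewrite gz mem0v.
  move: dimg; rewrite g0 dimv0 dimvf dim_matrix => e.
  by rewrite mulr1 in e; move: ha; rewrite -e.
have hS' : is_hom Q1N (@ind_act F gT _) Ut (@ind_act F gT _) (Cf X) S.
  by split; [rewrite imS | case: hS].
have hstU : stable_sp Q1N (@ind_act F gT _) Ut by exact: ind_sp_stable.
have [g' [hg' g'U dimg' _ _]] := iso_sym hstU hS' imS (limg_dim_eq ker0).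
by exists g'.
Qed.


Lemma part5 (VU : {vspace 'cV[F]_c}) :
  is_isotypic Q3 (mxact rV) fullv (mxact rU) fullv VU ->
  is_isotypic Q1N (@ind_act F gT _) Vt (@ind_act F gT _) Ut (Cf VU).
Proof.
case=> [[s [hs eVU]] hmax]; split.
  exists (map (fun X => Cf X) s); split.
    move=> X' /mapP[X Xs ->]; have [sX stX isoX] := hs X Xs; split.
    - exact: (ind_sp_mono eVlin (sjoinG hQ1) (subvf _)).
    - exact: ind_sp_stable.
    - exact: iso_part.
  by rewrite big_map eVU Cf_sum.
move=> Xv sXv stXv [f [hf fX dimf]].
have [g [[sg hg] gU dimg _ _]] := iso_sym stXv hf fX dimf.
have hgV : is_hom Q1N (@ind_act F gT _) Ut (@ind_act F gT _) Vt g.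
  by split => //; rewrite gU.
have [T [hT tT]] := surj4 hgV.
have ha := pos_irr hUirr.
have TVU u : T *m u \in VU.
  have [->|nT] := eqVneq T 0; first by rewrite mul0mx mem0v.
  pose lT := linfun (mulmx T : 'cV[F]_a -> 'cV[F]_c).
  have lTE u' : lT u' = T *m u' by rewrite lfunE.
  pose Y := (lT @: fullv)%VS.
  have TY u' : T *m u' \in Y by rewrite -lTE memv_img ?memvf.
  apply: (subvP (hmax Y (subvf _) _ _)) => //.
    move=> x v xQ3 /memv_imgP[u' _ ->]; rewrite /mxact lTE mulmxA -hT //.
    by rewrite -mulmxA.
  have hl : is_hom Q3 (mxact rU) fullv (mxact rV) Y lT.
    by split => // x v xQ3 _; rewrite /mxact !lTE !mulmxA hT.
  have ker0 : (fullv :&: lker lT = 0)%VS.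
    have stK : stable_sp Q3 (mxact rU) (fullv :&: lker lT)%VS.
      move=> x v xQ3; rewrite !memv_cap !memvf /= !memv_ker !lTE /mxact.
      by move/eqP => Tv; rewrite mulmxA hT // -mulmxA Tv mulmx0.
    case: hUirr => _ /(_ _ (capvSl _ _) stK) [//|KU]; exfalso.
    move/negP: nT; apply; apply/eqP; apply: (mx_ext (ltn0Sn 0)) => u'.
    have : u' \in (fullv :&: lker lT)%VS by rewrite KU memvf.
    by rewrite memv_cap memv_ker lTE mul0mx => /andP[_ /eqP].
  have stF : stable_sp Q3 (mxact rU) fullv by move=> *; exact: memvf.
  have [g' [hg' g'Y dimg' _ _]] := iso_sym stF hl (erefl _) (limg_dim_eq ker0).
  by exists g'.
have TC X : T *m X \in tens_sp VU fullv.
  move: X; apply: (outer_ind (P := fun X => T *m X \in tens_sp VU fullv)).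
  - by rewrite mulmx0 mem0v.
  - by move=> k u v hu hv; rewrite mulmxDr -scalemxAr; apply: memvD => //; apply: memvZ.
  - by move=> u w; rewrite mulmxA; apply: mem_tens_sp; rewrite ?memvf.
rewrite -gU; apply/subvP => _ /memv_imgP[f0 fU ->]; move: f0 fU.
apply: (ind_sp_ind (P := fun f0 => g f0 \in Cf VU)).
- by rewrite linear0 mem0v.
- by move=> k u v hu hv; rewrite linearD linearZ /=; apply: memvD => //; apply: memvZ.
- move=> g0 x gA _; rewrite (tilde_all tT) //.
  by apply: mem_ind_sp; [exact: eVlin | exact: gA | exact: TC].
Qed.


Lemma main_sec :
  let Q3 := (Q1 :&: Q2)%G in
  let Q1N := (Q1 <*> N)%G in
  let Q2N := (Q2 <*> N)%G in
  let Q3N := (Q3 <*> N)%G in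
  let tU := tens_act Q N rU rWe in
  let tV := tens_act Q N rV rWe in
  let Ut := ind_sp Q3N tU Q1N fullv in
  let Vt := ind_sp Q2N tV G fullv in
  let homT := fun T : 'M[F]_(c, a) =>
    forall x, x \in Q3 -> T *m rU x = rV x *m T in
  let tilde := fun (T : 'M[F]_(c, a))
      (S : 'Hom({ffun gT -> 'M[F]_(a, b)}, {ffun gT -> 'M[F]_(c, b)})) =>
    forall g (u : 'cV[F]_a) (w : 'cV[F]_b), g \in Q1N ->
      S (elem_ind Q3N tU g (u *m w^T)) = elem_ind Q2N tV g ((T *m u) *m w^T) in
  let homS := is_hom Q1N (@ind_act F gT _) Ut (@ind_act F gT _) Vt in
  [/\ irr_mod Q1N (@ind_act F gT _) Ut,
      irr_mod G (@ind_act F gT _) Vt,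
      ((forall T, homT T -> exists S, homS S /\ tilde T S)
      /\ (forall T S S', homT T -> tilde T S -> tilde T S' ->
            forall f, f \in Ut -> S f = S' f)),
      (forall T T' S, homT T -> homT T' -> tilde T S -> tilde T' S -> T = T')
      /\ (forall S, homS S -> exists T, homT T /\ tilde T S)
    & forall VU : {vspace 'cV[F]_c},
        is_isotypic Q3 (mxact rV) fullv (mxact rU) fullv VU ->
        is_isotypic Q1N (@ind_act F gT _) Vt (@ind_act F gT _) Ut
          (ind_sp Q2N tV Q1N (tens_sp VU fullv))].
Proof.
split.
- exact: irrU.
- exact: irrV.
- split; first exact: exist3.
  by move=> T S S' _ h1 h2; apply: uniq3 h1 h2.
- split; last exact: surj4.
  by move=> T T' S _ _ h1 h2; apply: inj4 h1 h2.
- exact: part5.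
Qed.

End Main.


Unset Implicit Arguments.
Unset Strict Implicit.

Theorem lemma2p9 (F : closedFieldType) (gT : finGroupType)
  (G Q N Q1 Q2 : {group gT})
  (hchar : [pchar F] =i pred0)
  (hG : (N ><| Q)%g = G)
  (a b c : nat)
  (rW : mx_representation F N b)
  (hWirr : irr_mod N (mxact rW) fullv)
  (hQ1 : Q1 \subset Q)
  (hQ2 : forall q, q \in Q2 <-> q \in Q /\ mxrep_iso N (fun n => rW (n ^ q)%g) rW)
  (rWe : mx_representation F (Q2 <*> N)%g b)
  (hWe : forall n, n \in N -> rWe n = rW n)
  (rU : mx_representation F (Q1 :&: Q2)%g a)
  (hUirr : irr_mod (Q1 :&: Q2)%g (mxact rU) fullv)
  (rV : mx_representation F Q2 c)
  (hVirr : irr_mod Q2 (mxact rV) fullv) :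
  let Q3 := (Q1 :&: Q2)%G in
  let Q1N := (Q1 <*> N)%G in
  let Q2N := (Q2 <*> N)%G in
  let Q3N := (Q3 <*> N)%G in
  let tU := tens_act Q N rU rWe in
  let tV := tens_act Q N rV rWe in
  let Ut := ind_sp Q3N tU Q1N fullv in
  let Vt := ind_sp Q2N tV G fullv in
  let homT := fun T : 'M[F]_(c, a) =>
    forall x, x \in Q3 -> T *m rU x = rV x *m T in
  let tilde := fun (T : 'M[F]_(c, a))
      (S : 'Hom({ffun gT -> 'M[F]_(a, b)}, {ffun gT -> 'M[F]_(c, b)})) =>
    forall g (u : 'cV[F]_a) (w : 'cV[F]_b), g \in Q1N ->
      S (elem_ind Q3N tU g (u *m w^T)) = elem_ind Q2N tV g ((T *m u) *m w^T) in
  let homS := is_hom Q1N (@ind_act F gT _) Ut (@ind_act F gT _) Vt in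
  [/\ irr_mod Q1N (@ind_act F gT _) Ut,
      irr_mod G (@ind_act F gT _) Vt,
      (* T |-> T~ is well defined (unique on Ut) and lands in the Hom space *)
      ((forall T, homT T -> exists S, homS S /\ tilde T S)
      /\ (forall T S S', homT T -> tilde T S -> tilde T S' ->
            forall f, f \in Ut -> S f = S' f)),
      (* injective and surjective *)
      (forall T T' S, homT T -> homT T' -> tilde T S -> tilde T' S -> T = T')
      /\ (forall S, homS S -> exists T, homT T /\ tilde T S)
    & (* isotypic components *)
      forall VU : {vspace 'cV[F]_c},
        is_isotypic Q3 (mxact rV) fullv (mxact rU) fullv VU ->
        is_isotypic Q1N (@ind_act F gT _) Vt (@ind_act F gT _) Ut
          (ind_sp Q2N tV Q1N (tens_sp VU fullv))].
Proof.
exact: (@main_sec F gT G Q N Q1 Q2 hchar hG a b c rW hWirr hQ1 hQ2 rWe hWe rU hUirr rV hVirr).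
Qed.
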